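(* With $G$, $d$, $G_0$, $X$ and the topology $\tau$ as in the context, the space $(X,\tau)$ is regular.
   Context: Let $G$ be a Polish group, $d$ a compatible right-invariant metric on $G$ (i.e. $d(g_0h,g_1h)=d(g_0,g_1)$) bounded by $1$, and $G_0$ a countable dense subgroup of $G$. Let $\mathcal L(G,d)$ be the set of functions $f:G\to[0,1]$ with $|f(g_1)-f(g_2)|\le d(g_1,g_2)$ for all $g_1,g_2$. Let $\mathbb Q^{<\mathbb N}$ be the set of finite sequences of rationals; for $s\in\mathbb Q^{<\mathbb N}$ and rationals $a_1,\dots,a_k$, $sa_1\dots a_k$ denotes the sequence $s$ followed by $a_1,\dots,a_k$ (natural numbers are regarded as rationals). Elements of $\mathcal L(G,d)^{\mathbb Q^{<\mathbb N}}$ are families $\vec f=(f_s)_{s\in\mathbb Q^{<\mathbb N}}$, and $G$ acts by $(g\cdot\vec f)_s(g_0)=f_s(g_0g)$. Let $X$ be the set of $\vec f\in\mathcal L(G,d)^{\mathbb Q^{<\mathbb N}}$ such that, writing $t=sq_0q_1q_2\,0\,m\,n$ and $u=sq_0q_1q_2\,1\,m\,n$: (1) for all $s\in\mathbb Q^{<\mathbb N}$, $g_0\in G_0$, $m,n\in\mathbb N$, $q_0,q_1,q_2,\epsilon\in\mathbb Q\cap(0,1)$ with $0<q_i\pm\epsilon<1$ ($i=0,1,2$): $f_t(g_0)<q_1-\epsilon$ or $f_s(g_0)\le q_0+\epsilon$; (2) for the same range of parameters: $f_u(g_0)\ge q_2+\epsilon$ or $f_t(g_0)\ge q_1-\epsilon$;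 (3) for all $s\in\mathbb Q^{<\mathbb N}$, $g_0\in G_0$, $q_0,\epsilon\in\mathbb Q\cap(0,1)$: if $f_s(g_0)<q_0$ then there are $q_1,q_2\in\mathbb Q$, $g_1\in G_0$, $m,n\in\mathbb N$ with $0<q_2<q_1<q_0<1$, $d(g_0,g_1)<\epsilon$, and $f_u(g_1)<q_2$ where $u=sq_0q_1q_2\,1\,m\,n$. The topology $\tau$ on $X$ is the one generated by the subbasis of all sets $\{\vec f\in X: f_s(g_0)<q_0\}$ for $s\in\mathbb Q^{<\mathbb N}$, $g_0\in G_0$, $q_0\in\mathbb Q$. *)

(* Defs.v *)
From Stdlib Require Import Reals List QArith Qcanon.
Open Scope R_scope.

Definition is_group {G : Type} (mul : G -> G -> G) (inv : G -> G) (e : G) : Prop :=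
  (forall x y z, mul x (mul y z) = mul (mul x y) z) /\
  (forall x, mul e x = x) /\ (forall x, mul x e = x) /\
  (forall x, mul (inv x) x = e) /\ (forall x, mul x (inv x) = e).

Definition is_metric {G : Type} (d : G -> G -> R) : Prop :=
  (forall x y, 0 <= d x y) /\
  (forall x y, d x y = 0 <-> x = y) /\
  (forall x y, d x y = d y x) /\
  (forall x y z, d x z <= d x y + d y z).

Definition equiv_metrics {G : Type} (d d' : G -> G -> R) : Prop :=
  (forall x eps, 0 < eps -> exists del, 0 < del /\ forall y, d x y < del -> d' x y < eps) /\
  (forall x eps, 0 < eps -> exists del, 0 < del /\ forall y, d' x y < del -> d x y < eps).

Definition complete_metric {G : Type} (d : G -> G -> R) : Prop :=
  forall u : nat -> G,
    (forall eps, 0 < eps -> exists N, forall n m, (N <= n)%nat -> (N <= m)%nat -> d (u n) (u m) < eps) ->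
    exists l, forall eps, 0 < eps -> exists N, forall n, (N <= n)%nat -> d (u n) l < eps.

Definition polish_group_with_metric {G : Type} (mul : G -> G -> G) (inv : G -> G) (e : G)
    (d : G -> G -> R) : Prop :=
  is_group mul inv e /\ is_metric d /\
  (forall x y eps, 0 < eps -> exists del, 0 < del /\
      forall x' y', d x x' < del -> d y y' < del -> d (mul x y) (mul x' y') < eps) /\
  (forall x eps, 0 < eps -> exists del, 0 < del /\
      forall x', d x x' < del -> d (inv x) (inv x') < eps) /\
  (exists D : nat -> G, forall x eps, 0 < eps -> exists n, d x (D n) < eps) /\
  (exists d', is_metric d' /\ equiv_metrics d d' /\ complete_metric d').

Definition right_invariant {G : Type} (mul : G -> G -> G) (d : G -> G -> R) : Prop :=
  forall g0 g1 h, d (mul g0 h) (mul g1 h) = d g0 g1.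

Definition bounded_by_one {G : Type} (d : G -> G -> R) : Prop :=
  forall x y, d x y <= 1.

Definition countable_dense_subgroup {G : Type} (mul : G -> G -> G) (inv : G -> G) (e : G)
    (d : G -> G -> R) (G0 : G -> Prop) : Prop :=
  G0 e /\ (forall x y, G0 x -> G0 y -> G0 (mul x y)) /\ (forall x, G0 x -> G0 (inv x)) /\
  (exists enum : nat -> G, forall g, G0 g <-> exists n, enum n = g) /\
  (forall g eps, 0 < eps -> exists g0, G0 g0 /\ d g g0 < eps).

Definition QR (q : Qc) : R := Q2R (this q).
Definition natQ (m : nat) : Qc := Q2Qc (inject_Z (Z.of_nat m)).
Definition in01 (q : Qc) : Prop := 0 < QR q < 1.

Definition lip1 {G : Type} (d : G -> G -> R) (f : G -> R) : Prop :=
  (forall g, 0 <= f g <= 1) /\ (forall g1 g2, Rabs (f g1 - f g2) <= d g1 g2).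

Definition family (G : Type) := list Qc -> G -> R.

Definition tseq (s : list Qc) (q0 q1 q2 : Qc) (m n : nat) : list Qc :=
  s ++ (q0 :: q1 :: q2 :: Q2Qc 0%Q :: natQ m :: natQ n :: nil).
Definition useq (s : list Qc) (q0 q1 q2 : Qc) (m n : nat) : list Qc :=
  s ++ (q0 :: q1 :: q2 :: Q2Qc 1%Q :: natQ m :: natQ n :: nil).

Definition inX {G : Type} (d : G -> G -> R) (G0 : G -> Prop) (f : family G) : Prop :=
  (forall s, lip1 d (f s)) /\
  (forall s g0 m n q0 q1 q2 eps, G0 g0 ->
     in01 q0 -> in01 q1 -> in01 q2 -> in01 eps ->
     0 < QR q0 - QR eps < 1 -> 0 < QR q0 + QR eps < 1 ->
     0 < QR q1 - QR eps < 1 -> 0 < QR q1 + QR eps < 1 ->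
     0 < QR q2 - QR eps < 1 -> 0 < QR q2 + QR eps < 1 ->
     f (tseq s q0 q1 q2 m n) g0 < QR q1 - QR eps \/ f s g0 <= QR q0 + QR eps) /\
  (forall s g0 m n q0 q1 q2 eps, G0 g0 ->
     in01 q0 -> in01 q1 -> in01 q2 -> in01 eps ->
     0 < QR q0 - QR eps < 1 -> 0 < QR q0 + QR eps < 1 ->
     0 < QR q1 - QR eps < 1 -> 0 < QR q1 + QR eps < 1 ->
     0 < QR q2 - QR eps < 1 -> 0 < QR q2 + QR eps < 1 ->
     f (useq s q0 q1 q2 m n) g0 >= QR q2 + QR eps \/ f (tseq s q0 q1 q2 m n) g0 >= QR q1 - QR eps) /\
  (forall s g0 q0 eps, G0 g0 -> in01 q0 -> in01 eps ->
     f s g0 < QR q0 ->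
     exists q1 q2 g1 m n, G0 g1 /\
       0 < QR q2 < QR q1 /\ QR q1 < QR q0 < 1 /\ d g0 g1 < QR eps /\
       f (useq s q0 q1 q2 m n) g1 < QR q2).

(* subbasic set {f in X : f_s(g0) < q0}; the X-part is handled in tau_open *)
Definition subbasic_holds {G : Type} (f : family G) (p : list Qc * G * Qc) : Prop :=
  match p with (s, g0, q0) => f s g0 < QR q0 end.

Definition tau_open {G : Type} (d : G -> G -> R) (G0 : G -> Prop) (U : family G -> Prop) : Prop :=
  (forall f, U f -> inX d G0 f) /\
  forall f, U f -> exists l : list (list Qc * G * Qc),
    Forall (fun p => G0 (snd (fst p))) l /\
    Forall (subbasic_holds f) l /\
    (forall f', inX d G0 f' -> Forall (subbasic_holds f') l -> U f').

Definition tau_closed {G : Type} (d : G -> G -> R) (G0 : G -> Prop) (C : family G -> Prop) : Prop :=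
  (forall f, C f -> inX d G0 f) /\
  tau_open d G0 (fun f => inX d G0 f /\ ~ C f).

Definition tau_regular {G : Type} (d : G -> G -> R) (G0 : G -> Prop) : Prop :=
  forall (x : family G) (C : family G -> Prop),
    inX d G0 x -> tau_closed d G0 C -> ~ C x ->
    exists U V : family G -> Prop,
      tau_open d G0 U /\ tau_open d G0 V /\ U x /\ (forall y, C y -> V y) /\
      (forall y, ~ (U y /\ V y)).

(* Main.v *)
Require Import Defs.
From Stdlib Require Import Reals List QArith Qcanon Qreals Lra Lia Classical.
Open Scope R_scope.

Lemma QR_Q2Qc (q : Q) : QR (Q2Qc q) = Q2R q.
Proof. unfold QR; simpl. apply Qeq_eqR, Qred_correct. Qed.

Lemma Q_dense_R (a b : R) : a < b -> exists q : Qc, a < QR q < b.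
Proof.
  intros Hab.
  destruct (archimed (/ (b - a))) as [H1 H2].
  set (z := up (/ (b - a))) in *.
  assert (Hpos : 0 < / (b - a)) by (apply Rinv_0_lt_compat; lra).
  assert (Hz : (0 < z)%Z) by (apply lt_0_IZR; lra).
  destruct (archimed (a * IZR z)) as [H3 H4].
  set (k := up (a * IZR z)) in *.
  exists (Q2Qc (k # Z.to_pos z)).
  rewrite QR_Q2Qc. unfold Q2R; simpl.
  rewrite Z2Pos.id by lia.
  assert (Hzr : 0 < IZR z) by lra.
  split.
  - apply (Rmult_lt_reg_r (IZR z)); auto. field_simplify; lra.
  - apply (Rmult_lt_reg_r (IZR z)); auto. field_simplify; try lra.
    assert (1 < (b - a) * IZR z).
    { apply (Rmult_lt_reg_l (/ (b-a))); auto. rewrite <- Rmult_assoc, Rinv_l by lra. lra. }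
    lra.
Qed.

Definition trip (G : Type) := (list Qc * G * Qc)%type.

Lemma one_sep {G : Type} (d : G -> G -> R) (G0 : G -> Prop) (x : Defs.family G)
  (s : list Qc) (g0 : G) (q0 : Qc) :
  inX d G0 x -> G0 g0 -> x s g0 < QR q0 ->
  exists lu lv : list (trip G),
    Forall (fun p => G0 (snd (fst p))) lu /\ Forall (fun p => G0 (snd (fst p))) lv /\
    Forall (subbasic_holds x) lu /\
    (forall f, inX d G0 f -> Forall (subbasic_holds f) lu -> Forall (subbasic_holds f) lv -> False) /\
    (forall f, inX d G0 f -> ~ (f s g0 < QR q0) -> Forall (subbasic_holds f) lv).
Proof.
  intros Hx Hg0 Hlt.
  destruct Hx as [HL [H1 [H2 H3]]].
  destruct (Rle_or_lt (QR q0) 1) as [Hq0 | Hq0].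
  2:{ exists nil, ((s, g0, Q2Qc 0%Q) :: nil).
      split; [constructor|]. split; [constructor; auto|]. split; [constructor|]. split.
      - intros f [HLf _] _ Hv. inversion Hv; subst. simpl in H4.
        rewrite QR_Q2Qc in H4. unfold Q2R in H4; simpl in H4.
        destruct (HLf s) as [Hb _]. specialize (Hb g0). lra.
      - intros f [HLf _] Hn. exfalso. apply Hn.
        destruct (HLf s) as [Hb _]. specialize (Hb g0). lra. }
  set (a := x s g0) in *. set (b := QR q0) in *.
  destruct (HL s) as [Hb _]. pose proof (Hb g0) as Ha. fold a in Ha.
  destruct (Q_dense_R a (a + (b - a) / 3)) as [q0' Hq0']; [lra|].
  destruct (Q_dense_R 0 (Rmin ((b - a)/3) 1)) as [ep Hep].
  { apply Rmin_glb_lt; lra. }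
  pose proof (Rmin_l ((b - a)/3) 1). pose proof (Rmin_r ((b - a)/3) 1).
  assert (Hin0 : in01 q0') by (unfold in01; lra).
  assert (Hinep : in01 ep) by (unfold in01; lra).
  destruct (H3 s g0 q0' ep Hg0 Hin0 Hinep ltac:(unfold a in Hq0'; lra))
    as [q1 [q2 [g1 [m [n [Hg1 [Hq2 [Hq1 [Hd Hu]]]]]]]]].
  set (mn := Rmin (Rmin (Rmin (QR q0') (1 - QR q0')) (Rmin (QR q1) (1 - QR q1)))
                  (Rmin (Rmin (QR q2) (1 - QR q2)) (b - QR ep - QR q0'))).
  assert (Hmn : 0 < mn).
  { unfold mn. repeat apply Rmin_glb_lt; lra. }
  destruct (Q_dense_R 0 mn) as [e' He']; [lra|].
  assert (mn <= QR q0') by (unfold mn; repeat (eapply Rle_trans; [apply Rmin_l|]); lra).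
  assert (mn <= 1 - QR q0') by (unfold mn; eapply Rle_trans; [apply Rmin_l|];
     eapply Rle_trans; [apply Rmin_l|]; eapply Rle_trans; [apply Rmin_r|]; lra).
  assert (mn <= QR q1) by (unfold mn; eapply Rle_trans; [apply Rmin_l|];
     eapply Rle_trans; [apply Rmin_r|]; eapply Rle_trans; [apply Rmin_l|]; lra).
  assert (mn <= 1 - QR q1) by (unfold mn; eapply Rle_trans; [apply Rmin_l|];
     eapply Rle_trans; [apply Rmin_r|]; eapply Rle_trans; [apply Rmin_r|]; lra).
  assert (mn <= QR q2) by (unfold mn; eapply Rle_trans; [apply Rmin_r|];
     eapply Rle_trans; [apply Rmin_l|]; eapply Rle_trans; [apply Rmin_l|]; lra).
  assert (mn <= 1 - QR q2) by (unfold mn; eapply Rle_trans; [apply Rmin_r|];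
     eapply Rle_trans; [apply Rmin_l|]; eapply Rle_trans; [apply Rmin_r|]; lra).
  assert (mn <= b - QR ep - QR q0') by (unfold mn; eapply Rle_trans; [apply Rmin_r|];
     eapply Rle_trans; [apply Rmin_r|]; lra).
  assert (Hin1 : in01 q1) by (unfold in01; lra).
  assert (Hin2 : in01 q2) by (unfold in01; lra).
  assert (Hine : in01 e') by (unfold in01; lra).
  set (c := Q2Qc (this q1 - this e')%Q).
  assert (Hc : QR c = QR q1 - QR e').
  { unfold c. rewrite QR_Q2Qc, Q2R_minus. reflexivity. }
  exists ((useq s q0' q1 q2 m n, g1, q2) :: nil), ((tseq s q0' q1 q2 m n, g1, c) :: nil).
  split; [constructor; auto|]. split; [constructor; auto|].
  split; [constructor; auto|].
  split.
  - intros f [_ [_ [Hf2 _]]] Hu' Hv'. inversion Hu'; inversion Hv'; subst. simpl in *.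
    rewrite Hc in *.
    destruct (Hf2 s g1 m n q0' q1 q2 e' Hg1 Hin0 Hin1 Hin2 Hine
      ltac:(lra) ltac:(lra) ltac:(lra) ltac:(lra) ltac:(lra) ltac:(lra)); lra.
  - intros f [HLf [Hf1 _]] Hn. constructor; [|constructor]. simpl. rewrite Hc.
    destruct (HLf s) as [_ Hlip]. specialize (Hlip g0 g1).
    pose proof (Rle_abs (f s g0 - f s g1)).
    destruct (Hf1 s g1 m n q0' q1 q2 e' Hg1 Hin0 Hin1 Hin2 Hine
      ltac:(lra) ltac:(lra) ltac:(lra) ltac:(lra) ltac:(lra) ltac:(lra)); [auto|].
    exfalso. apply Hn. fold b. lra.
Qed.

Lemma list_sep {G : Type} (d : G -> G -> R) (G0 : G -> Prop) (x : Defs.family G)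
  (l : list (trip G)) :
  inX d G0 x -> Forall (fun p => G0 (snd (fst p))) l -> Forall (subbasic_holds x) l ->
  exists (lu : list (trip G)) (LV : list (list (trip G))),
    Forall (fun p => G0 (snd (fst p))) lu /\
    Forall (Forall (fun p => G0 (snd (fst p)))) LV /\
    Forall (subbasic_holds x) lu /\
    (forall f, inX d G0 f -> Forall (subbasic_holds f) lu ->
        Exists (Forall (subbasic_holds f)) LV -> False) /\
    (forall f, inX d G0 f -> ~ Forall (subbasic_holds f) l ->
        Exists (Forall (subbasic_holds f)) LV).
Proof.
  intros Hx. induction l as [|p l IH]; intros HG Hh.
  - exists nil, nil. split; [constructor|]. split; [constructor|]. split; [constructor|].
    split.
    + intros f _ _ He. inversion He.
    + intros f _ Hn. exfalso. apply Hn. constructor.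
  - inversion HG; inversion Hh; subst.
    destruct (IH H2 H6) as [lu [LV [A [B [C [D E]]]]]].
    destruct p as [[s g0] q0]. simpl in H1, H5.
    destruct (one_sep d G0 x s g0 q0 Hx H1 H5) as [lu1 [lv1 [A1 [B1 [C1 [D1 E1]]]]]].
    exists (lu1 ++ lu), (lv1 :: LV).
    split; [apply Forall_app; auto|].
    split; [constructor; auto|].
    split; [apply Forall_app; auto|].
    split.
    + intros f Hf Hu He. apply Forall_app in Hu. destruct Hu as [Hu1 Hu2].
      inversion He; subst.
      * eapply D1; eauto.
      * eapply D; eauto.
    + intros f Hf Hn.
      destruct (classic (f s g0 < QR q0)) as [Hy | Hy].
      * apply Exists_cons_tl. apply E; [exact Hf|]. intro Hl. apply Hn. constructor; [exact Hy|exact Hl].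
      * apply Exists_cons_hd. apply E1; auto.
Qed.

Theorem lemma2p5 (G : Type) (mul : G -> G -> G) (inv : G -> G) (e : G)
  (d : G -> G -> R) (G0 : G -> Prop) :
  polish_group_with_metric mul inv e d ->
  right_invariant mul d ->
  bounded_by_one d ->
  countable_dense_subgroup mul inv e d G0 ->
  tau_regular d G0.
Proof.
  intros _ _ _ _ x C Hx [HCX [_ HCo]] HnC.
  destruct (HCo x (conj Hx HnC)) as [l [HG [Hh Hsub]]].
  destruct (list_sep d G0 x l Hx HG Hh) as [lu [LV [A [B [Cc [D E]]]]]].
  exists (fun f => inX d G0 f /\ Forall (subbasic_holds f) lu),
         (fun f => inX d G0 f /\ Exists (Forall (subbasic_holds f)) LV).
  split; [|split; [|split; [|split]]].
  - split; [intros f [H _]; exact H|].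
    intros f [Hf Hu]. exists lu. split; [exact A|]. split; [exact Hu|]. intros f0 Hf0 Hu0; split; assumption.
  - split; [intros f [H _]; exact H|].
    intros f [Hf Hv]. apply Exists_exists in Hv. destruct Hv as [lv [Hin Hlv]].
    exists lv. split; [rewrite Forall_forall in B; apply B; auto|]. split; auto.
    intros f' Hf' Hl'. split; auto. apply Exists_exists. exists lv; auto.
  - split; auto.
  - intros y Hy. pose proof (HCX y Hy) as HyX. split; auto. apply E; auto.
    intro Hl. destruct (Hsub y HyX Hl) as [_ Hn]. auto.
  - intros y [[Hy Hu] [_ Hv]]. eapply D; eauto.
Qed.
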